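(* Let $(X,d)$ be a nonempty compact homogeneous metric space of diameter $D$, and let $m$ be a Borel probability measure on $X$ invariant under all isometries. Let $A=\int_{X\times X} d(x,y)\,d(m\times m)(x,y)$. Then $A=\frac{D}{2}$ if and only if $X$ is strictly antipodal.
   Context: A metric space is homogeneous if its isometry group acts transitively on its points. Let $X$ be a compact metric space of diameter $D=\sup_{x,y}d(x,y)$. $X$ is called antipodal if for every $x\in X$ there exists at least one point $O_x\in X$ (an antipode of $x$) with $d(x,O_x)=D$ such that there is an isometry of $X$ mapping $x$ to $O_x$. $X$ is called strictly antipodal if it is antipodal and, for every $x\in X$ and every antipode $O_x$ of $x$, one has $D=d(x,y)+d(y,O_x)$ for all $y\in X$. *)

(* Defs.v *)
From HB Require Import structures.
From mathcomp Require Import all_boot all_order all_algebra.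
From mathcomp Require Import all_classical all_reals all_analysis.
Set Implicit Arguments. Unset Strict Implicit. Unset Printing Implicit Defensive.
Import Order.TTheory GRing.Theory Num.Theory.
Local Open Scope classical_set_scope.
Local Open Scope ring_scope.

Section MetricDefs.
Variables (R : realType) (T : Type) (d : T -> T -> R).

Definition is_metric : Prop :=
  [/\ forall x y, 0 <= d x y,
      forall x y, d x y = 0 <-> x = y,
      forall x y, d x y = d y x &
      forall x y z, d x z <= d x y + d y z].

Definition mball (x : T) (e : R) : set T := [set y | d x y < e].
Definition mopen (A : set T) : Prop :=
  forall x, A x -> exists2 e : R, 0 < e & mball x e `<=` A.

Definition mcompact : Prop :=
  forall (I : Type) (U : I -> set T), (forall i, mopen (U i)) ->
    \bigcup_(i in [set: I]) U i = [set: T] ->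
    exists2 F : set I, finite_set F & \bigcup_(i in F) U i = [set: T].

Definition is_isometry (f : T -> T) : Prop :=
  bijective f /\ forall x y, d (f x) (f y) = d x y.

Definition metric_homogeneous : Prop :=
  forall x y, exists2 f, is_isometry f & f x = y.

Definition mdiam : R := sup [set d p.1 p.2 | p in [set: T * T]].

Definition is_antipode (x o : T) : Prop :=
  d x o = mdiam /\ exists2 f, is_isometry f & f x = o.

Definition antipodal : Prop := forall x, exists o, is_antipode x o.

Definition strictly_antipodal : Prop :=
  antipodal /\
  forall x o, is_antipode x o -> forall y, mdiam = d x y + d y o.

End MetricDefs.

Definition borel_of (R : realType) (T : pointedType) (d : T -> T -> R) :=
  g_sigma_algebraType (mopen d).

(* Main.v *)
Require Import Defs.
From HB Require Import structures.
From mathcomp Require Import all_boot all_order all_algebra.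
From mathcomp Require Import all_classical all_reals all_analysis.
From mathcomp Require Import lra measurable_realfun.
Import Order.TTheory GRing.Theory Num.Theory.
Local Open Scope classical_set_scope.
Local Open Scope ring_scope.


Section Metric.
Variables (R : realType) (T : pointedType) (d : T -> T -> R).
Hypothesis hmet : is_metric d.
Hypothesis hcomp : mcompact d.
Hypothesis hhom : metric_homogeneous d.

Lemma d_ge0 x y : 0 <= d x y. Proof. by case: hmet. Qed.
Lemma d_xx x : d x x = 0. Proof. by case: hmet => _ h _ _; apply/h. Qed.
Lemma d_sym x y : d x y = d y x. Proof. by case: hmet. Qed.
Lemma d_tri x y z : d x z <= d x y + d y z. Proof. by case: hmet. Qed.

Lemma open_gt q r : mopen d [set y | r < d q y].
Proof.
move=> y /= ry; exists (d q y - r); first by rewrite subr_gt0.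
move=> z /=; rewrite /mball /= => yz.
have := d_tri q z y; rewrite (d_sym z y) => h; lra.
Qed.

Lemma open_lt q r : mopen d [set y | d q y < r].
Proof.
move=> y /= ry; exists (r - d q y); first by rewrite subr_gt0.
move=> z /=; rewrite /mball /= => yz.
have := d_tri q y z; lra.
Qed.

Lemma ball_open x e : mopen d (mball d x e).
Proof. exact: open_lt. Qed.

Lemma le_sum_seq (F : T -> R) (s : seq T) z : (forall y, 0 <= F y) ->
  z \in s -> F z <= \sum_(y <- s) F y.
Proof.
move=> F0 zs; rewrite (big_rem z zs) /= lerDl.
by apply: sumr_ge0 => i _.
Qed.

Lemma le_sum_seqn (s : seq nat) (z : nat) :
  z \in s -> z%:R <= \sum_(y <- s) (y%:R : R).
Proof.
move=> zs; rewrite (big_rem z zs) /= lerDl.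
by apply: sumr_ge0 => i _.
Qed.

Lemma net e : 0 < e -> exists s : seq T, forall x, exists2 z, z \in s & d z x < e.
Proof.
move=> e0.
have [|F Ffin FU] := hcomp T (fun z => mball d z e) (fun z => ball_open z e).
  apply/seteqP; split => // x _; exists x => //; rewrite /mball /= d_xx.
  by [].
exists (finmap.enum_fset (fset_set F)) => x.
have : [set: T] x by [].
rewrite -FU => -[z Fz xz]; exists z => //.
by rewrite in_fset_set // inE.
Qed.
End Metric.
Arguments d_ge0 {R T d}. Arguments d_xx {R T d}. Arguments d_sym {R T d}.
Arguments d_tri {R T d}. Arguments open_gt {R T d}. Arguments open_lt {R T d}.
Arguments ball_open {R T d}. Arguments net {R T d}.
Arguments le_sum_seq {R T}. Arguments le_sum_seqn {R}.

Section Diam.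
Variables (R : realType) (T : pointedType) (d : T -> T -> R).
Hypothesis hmet : is_metric d.
Hypothesis hcomp : mcompact d.
Hypothesis hhom : metric_homogeneous d.

Lemma d_bounded : exists B, forall x y, d x y <= B.
Proof.
have [s hs] := net hmet hcomp 1 ltr01.
exists (2 * (\sum_(z <- s) d point z + 1)) => x y.
have h : forall y, d point y <= \sum_(z <- s) d point z + 1.
  move=> w; have [z zs zw] := hs w.
  have := le_sum_seq (d point) s z (d_ge0 hmet point) zs.
  have := d_tri hmet point z w; lra.
have := d_tri hmet x point y; rewrite (d_sym hmet x point).
have := h x; have := h y; lra.
Qed.

Let S := [set d p.1 p.2 | p in [set: T * T]].

Lemma has_supS : has_sup S.
Proof.
split; first by exists (d point point); exists (point, point).
have [B hB] := d_bounded; exists B => _ [p _ <-]; exact: hB.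
Qed.

Lemma d_le_diam x y : d x y <= mdiam d.
Proof. by apply: (sup_upper_bound has_supS); exists (x, y). Qed.

Lemma diam_le r : (forall x y, d x y <= r) -> mdiam d <= r.
Proof.
move=> h; apply: ge_sup; first by exists (d point point); exists (point, point).
by move=> _ [p _ <-]; exact: h.
Qed.

Lemma diam_attained x : exists y, d x y = mdiam d.
Proof.
apply/not_existsP => hn.
have lt y : d x y < mdiam d.
  by rewrite lt_neqAle d_le_diam andbT; apply/eqP; exact: hn.
pose U (n : nat) := [set y | d x y < mdiam d - n.+1%:R^-1].
have [|F Ffin FU] := hcomp nat U (fun n => open_lt hmet x _).
  apply/seteqP; split => // y _.
  exists (Num.truncn ((mdiam d - d x y)^-1)) => //.
  rewrite /U /=.
  have hp : 0 < mdiam d - d x y by rewrite subr_gt0.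
  have := truncnS_gt ((mdiam d - d x y)^-1).
  move: (_.+1)%:R => N hN.
  have N0 : 0 < N by apply: lt_trans hN; rewrite invr_gt0.
  have : N^-1 < mdiam d - d x y.
    by rewrite -(invrK (mdiam d - d x y)) ltf_pV2 ?posrE ?invr_gt0.
  lra.
pose N : R := \sum_(i <- finmap.enum_fset (fset_set F)) i%:R.
have N0 : 0 <= N by apply: sumr_ge0.
have nN' n : F n -> n%:R <= N.
  by move=> Fn; apply: le_sum_seqn; rewrite in_fset_set // inE.
clearbody N.
have hy y : d x y <= mdiam d - (N + 1)^-1.
  have : [set: T] y by [].
  rewrite -FU => -[n Fn]; rewrite /U /= => hn'.
  have nN := nN' n Fn.
  have : (N + 1)^-1 <= n.+1%:R^-1.
    rewrite lef_pV2 ?posrE ?ltr0n//; last by lra.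
    by rewrite -addn1 natrD lerD2r.
  move: hn'; move: (n.+1%:R^-1) => a; move: ((N + 1)^-1) => b; lra.
have : mdiam d <= mdiam d - (N + 1)^-1.
  apply: diam_le => a b.
  have [f [_ fiso] fa] := hhom a x.
  by rewrite -fiso fa.
have : 0 < (N + 1)^-1 by rewrite invr_gt0; lra.
move: ((N + 1)^-1) => b; lra.
Qed.

End Diam.
Arguments d_bounded {R T d}. Arguments d_le_diam {R T d}.
Arguments diam_le {R T d}. Arguments diam_attained {R T d}.

Section Meas.
Variables (R : realType) (T : pointedType) (d : T -> T -> R).
Hypothesis hmet : is_metric d.
Hypothesis hcomp : mcompact d.

Local Notation B := (borel_of d).

Lemma mopen_meas (A : set B) : mopen d A -> measurable A.
Proof. by move=> h; apply: sub_sigma_algebra. Qed.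

Lemma meas_dq (q : T) : measurable_fun [set: B] (fun x : B => d q x).
Proof.
apply: (measurability _ (measurable_realfun.RGenOInfty.measurableE R)).
move=> _ [_ [r ->] <-]; rewrite setTI.
apply: mopen_meas.
have -> : (fun x : B => d q x) @^-1` `]r, +oo[ = [set y | r < d q y].
  by apply/seteqP; split => y /=; rewrite in_itv /= andbT.
exact: open_gt.
Qed.


Lemma meas_dist : measurable_fun [set: B * B] (fun z : B * B => d z.1 z.2).
Proof.
have [s hs] : exists s : nat -> seq T, forall n x,
    exists2 z, z \in s n & d z x < n.+1%:R^-1.
  have [f hf] := choice (fun n => net hmet hcomp (n.+1%:R^-1)
    (ltac:(by rewrite invr_gt0 ltr0n))).
  by exists f.
pose q n i := nth point (s n) i.
pose g n i := fun z : B * B => `|d (q n i) z.1 - d (q n i) z.2|.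
have mg n i : measurable_fun [set: B * B] (g n i).
  apply: measurableT_comp; first exact: measurable_realfun.normr_measurable.
  apply: measurable_realfun.measurable_funB.
    exact: (measurableT_comp (meas_dq (q n i)) measurable_fst).
  exact: (measurableT_comp (meas_dq (q n i)) measurable_snd).
apply: (measurability _ (measurable_realfun.RGenOInfty.measurableE R)).
move=> _ [_ [r ->] <-]; rewrite setTI.
have -> : (fun z : B * B => d z.1 z.2) @^-1` `]r, +oo[ =
    \bigcup_n \bigcup_i (g n i @^-1` `]r, +oo[).
  apply/seteqP; split => -[x y] /=; rewrite ?in_itv /= ?andbT.
    move=> rxy.
    have hp : 0 < (d x y - r) / 2 by rewrite divr_gt0 // subr_gt0.
    have [n hN] : exists n : nat, ((d x y - r) / 2)^-1 < n%:R.
      by exists (Num.truncn (((d x y - r) / 2)^-1)).+1; exact: truncnS_gt.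
    have N0 : 0 < n%:R :> R by apply: (lt_trans _ hN); rewrite invr_gt0.
    have hn : n%:R^-1 < (d x y - r) / 2.
      by rewrite -(invrK ((d x y - r) / 2)) ltf_pV2 ?posrE ?invr_gt0.
    have n0 : (0 < n)%N by rewrite -(ltr0n R).
    have [z zs zx] := hs n.-1 x.
    rewrite prednK // in zx.
    exists n.-1 => //; exists (index z (s n.-1)) => //=.
    rewrite /g /q nth_index // in_itv /= andbT.
    have h1 : d z y - d z x <= `|d z x - d z y| by rewrite distrC ler_norm.
    have h2 := d_tri hmet x z y; rewrite (d_sym hmet x z) in h2.
    move: h1; move: (`|d z x - d z y|) => a.
    move: hn zx; move: (n%:R^-1) => b; lra.
  move=> [n _ [i _]]; rewrite /g /= in_itv /= andbT => h.
  apply: lt_le_trans h _; rewrite ler_norml.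
  have := d_tri hmet (q n i) x y; have := d_tri hmet (q n i) y x.
  rewrite (d_sym hmet y x); lra.
apply: bigcupT_measurable => n; apply: bigcupT_measurable => i.
have := mg n i measurableT _ (measurable_itv `]r, +oo[).
by rewrite setTI.
Qed.

End Meas.
Arguments mopen_meas {R T d}. Arguments meas_dq {R T d}. Arguments meas_dist {R T d}.

Section Integ.
Local Open Scope ereal_scope.
Variables (R : realType) (T : pointedType) (d : T -> T -> R).
Hypothesis hmet : is_metric d.
Hypothesis hcomp : mcompact d.
Hypothesis hhom : metric_homogeneous d.
Variable m : probability (borel_of d) R.
Hypothesis hinv : forall f : T -> T, is_isometry d f ->
     forall A : set (borel_of d), measurable A -> m (f @^-1` A) = m A.

Local Notation B := (borel_of d).

Lemma meas_dqE (q : T) : measurable_fun [set: B] (EFin \o (fun x : B => d q x)).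
Proof. by apply/measurable_EFinP; exact: meas_dq. Qed.

Lemma iso_meas f : is_isometry d f -> measurable_fun [set: B] (f : B -> B).
Proof.
move=> [_ fiso].
apply: (measurability _ (erefl (@measurable _ B))).
move=> _ [A mA <-]; rewrite setTI; apply: sub_sigma_algebra.
move=> x /= Afx; have [e e0 he] := mA _ Afx.
by exists e => // y /= xy; apply: he; rewrite /mball /= fiso.
Qed.

Definition Fd (x : T) := \int[m]_(y in [set: B]) (d x y)%:E.

Lemma Fd_iso f x : is_isometry d f -> Fd (f x) = Fd x.
Proof.
move=> hf; have [[g fg gf] fiso] := hf.
have giso : is_isometry d g.
  split; first by exists f.
  by move=> a b; rewrite -fiso !gf.
rewrite /Fd.
transitivity (\int[m]_(y in [set: B]) ((fun z : B => (d x z)%:E) \o g) y).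
  by apply: eq_integral => y _ /=; rewrite -[in RHS]fiso gf.
have H := ge0_integral_pushforward (iso_meas g giso) m measurableT (meas_dqE x)
  (fun y _ => (ltac:(by rewrite /= lee_fin (d_ge0 hmet)))).
rewrite preimage_setT in H; rewrite -H.
apply: eq_measure_integral; first exact: (iso_meas g giso).
by move=> mg A mA _ /=; rewrite /pushforward hinv.
Qed.


Lemma Fd_const x y : Fd x = Fd y.
Proof. by have [f hf fx] := hhom x y; rewrite -fx (Fd_iso f x hf). Qed.

Lemma main_int :
  \int[(m \x m)%E]_(z in [set: B * B]) (d z.1 z.2)%:E = Fd point.
Proof.
have mf : measurable_fun [set: B * B] (EFin \o (fun z : B * B => d z.1 z.2)).
  by apply/measurable_EFinP; exact: (meas_dist hmet hcomp).
have f0 : forall z : B * B, 0 <= (EFin \o (fun z : B * B => d z.1 z.2)) z.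
  by move=> z; rewrite /= lee_fin (d_ge0 hmet).
have := fubini_tonelli1 _ mf f0; rewrite /= => ->.
rewrite /fubini_F /=.
transitivity (\int[m]_(x in [set: B]) (cst (Fd point)) x).
  by apply: eq_integral => x _ /=; exact: Fd_const.
rewrite integral_cst //.
by rewrite [X in _ * X](_ : _ = 1) ?mule1 //; exact: probability_setT.
Qed.

Lemma ball_pos y r : (0 < r)%R -> 0 < m (mball d y r).
Proof.
move=> r0; rewrite lt0e measure_ge0 andbT; apply/eqP => m0.
have mz z : m (mball d z r) = 0.
  have [f hf fz] := hhom z y; have fiso := hf.2.
  have <- : f @^-1` mball d y r = mball d z r.
    by rewrite eqEsubset; split => w; rewrite /preimage /mball /= -fz fiso.
  by rewrite hinv // ?m0; exact: mopen_meas (ball_open hmet y r).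
have [|F Ffin FU] := hcomp T (fun z => mball d z r) (fun z => ball_open hmet z r).
  apply/seteqP; split => // x _; exists x => //; rewrite /mball /= (d_xx hmet).
  by [].
pose s := finmap.enum_fset (fset_set F).
have : m.-negligible (\bigcup_k (mball d (nth point s k) r : set B)).
  apply: negligible_bigcup => k; exists (mball d (nth point s k) r).
  by split; [exact: mopen_meas (ball_open hmet _ r) | exact: mz | ].
move=> [A [mA mA0 hA]].
have AT : A = setT.
  apply/seteqP; split => // x _; apply: hA.
  have : [set: T] x by [].
  rewrite -FU => -[z Fz xz]; exists (index z s) => //.
  by rewrite nth_index // /s in_fset_set // inE.
rewrite AT [X in X = _](_ : _ = 1) in mA0; last exact: probability_setT.
by move: mA0 => /eqP; rewrite eqe oner_eq0.
Qed.

Lemma Fsum x o : \int[m]_(y in [set: B]) ((d x y)%:E + (d o y)%:E) =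
  Fd point + Fd point.
Proof.
rewrite ge0_integralD //; first last.
- exact: meas_dqE.
- by move=> y _; rewrite lee_fin (d_ge0 hmet).
- exact: meas_dqE.
- by move=> y _; rewrite lee_fin (d_ge0 hmet).
by rewrite -/(Fd x) -/(Fd o) (Fd_const x point) (Fd_const o point).
Qed.

Lemma main_equiv :
  \int[(m \x m)%E]_(z in [set: B * B]) (d z.1 z.2)%:E = (mdiam d / 2)%:E
  <-> strictly_antipodal d.
Proof.
rewrite main_int.
have D0 : (0 <= mdiam d)%R.
  by apply: (le_trans _ (d_le_diam hmet hcomp point point)); rewrite (d_xx hmet).
split.
- move=> hF.
  split.
    move=> x; have [y hy] := diam_attained hmet hcomp hhom x.
    have [f hf fx] := hhom x y.
    by exists y; split => //; exists f.
  move=> x o [hxo _] y.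
  apply/eqP; rewrite eq_le; apply/andP; split.
    by rewrite -hxo; exact: (d_tri hmet).
  rewrite leNgt; apply/negP => hlt.
  set eps := (d x y + d y o - mdiam d)%R.
  have eps0 : (0 < eps)%R by rewrite subr_gt0.
  pose Bl : set B := mball d y (eps / 4).
  have mB : measurable Bl := mopen_meas _ (ball_open hmet y _).
  have hB := ball_pos y (eps / 4)%R (ltac:(by rewrite divr_gt0)).
  have hint := Fsum x o; rewrite hF in hint.
  have lhsE : (mdiam d)%:E + (eps / 2)%:E * m Bl =
      \int[m]_(w in [set: B]) ((cst (mdiam d)%:E) w + ((eps / 2) * \1_Bl w)%:E).
    have h1 : measurable_fun [set: B] (fun w : B => ((eps / 2) * \1_Bl w)%:E).
      apply/measurable_EFinP; apply: measurable_funM.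
        exact: measurable_cst.
      exact: measurable_indic.
    have h2 : forall w, [set: B] w -> 0 <= ((eps / 2) * \1_Bl w)%:E.
      by move=> w _; rewrite lee_fin mulr_ge0 // divr_ge0 // ltW.
    have h3 : measurable_fun [set: B] (cst (mdiam d)%:E).
      exact: measurable_cst.
    have h4 : forall w, [set: B] w -> 0 <= (cst (mdiam d)%:E) w.
      by move=> w _; rewrite /= lee_fin.
    rewrite ge0_integralD //.
    rewrite integral_cst // [X in _ = _ * X + _](_ : _ = 1) ?mule1; last exact: probability_setT.
    rewrite (integralZl_indic measurableT (fun _ => Bl)) //.
      by rewrite integral_indic // setIT.
    by move=> h; exfalso; move: h; rewrite ltNge divr_ge0 // ltW.
  have : (mdiam d)%:E + (eps / 2)%:E * m Bl <= (mdiam d)%:E.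
    rewrite lhsE [X in _ <= X](_ : _ = (mdiam d / 2)%:E + (mdiam d / 2)%:E); last first.
      by rewrite -EFinD; congr (_%:E); lra.
    rewrite -hint.
    apply: ge0_le_integral => //.
    + move=> w _ /=; rewrite -EFinD lee_fin; apply: addr_ge0 => //.
      by rewrite mulr_ge0 // divr_ge0 // ltW.
    + apply: emeasurable_funD; first exact: measurable_cst.
      apply/measurable_EFinP; apply: measurable_funM.
        exact: measurable_cst.
      exact: measurable_indic.
    + apply: emeasurable_funD; exact: meas_dqE.
    + move=> w _ /=; rewrite -!EFinD lee_fin.
      have t1 := d_tri hmet x w o; rewrite hxo in t1.
      rewrite (d_sym hmet o w).
      case: (boolP (w \in Bl)) => wB.
        rewrite indicE wB mulr1.
        move: wB; rewrite inE /Bl /mball /= => wB.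
        have t2 := d_tri hmet x w y; have t3 := d_tri hmet y w o.
        rewrite (d_sym hmet w y) in t2.
        rewrite /eps in wB *; lra.
      by rewrite indicE (negbTE wB) mulr0 addr0.
  move: hB; case: (m Bl) => [r| |] //=.
    rewrite lte_fin -EFinM -EFinD lee_fin => r0 h.
    have : (0 < eps / 2 * r)%R by rewrite mulr_gt0 // divr_gt0.
    move: h; move: (eps / 2 * r)%R => a; lra.
  by move=> _; rewrite muleC gt0_mulye ?lte_fin ?divr_gt0 // addey.
- move=> [anti strict].
  have [ap hap] := anti point.
  have hc : \int[m]_(y in [set: B]) ((d point y)%:E + (d ap y)%:E) = (mdiam d)%:E.
    transitivity (\int[m]_(y in [set: B]) (cst (mdiam d)%:E) y).
      apply: eq_integral => y _ /=.
      by rewrite -EFinD (d_sym hmet ap y) -(strict point ap hap y).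
    by rewrite integral_cst // [X in _ * X](_ : _ = 1) ?mule1 //; exact: probability_setT.
  rewrite Fsum in hc.
  move: hc; case: (Fd point) => [r| |] //= h.
  move: h => /eqP; rewrite eqe => /eqP h.
  by congr (_%:E); lra.
Qed.

End Integ.

Theorem proposition2p4 (R : realType) (T : pointedType) (d : T -> T -> R)
  (hmet : is_metric d) (hcomp : mcompact d) (hhom : metric_homogeneous d)
  (m : probability (borel_of d) R)
  (hinv : forall f : T -> T, is_isometry d f ->
     forall A : set (borel_of d), measurable A -> m (f @^-1` A) = m A) :
  (\int[(m \x m)%E]_(z in [set: borel_of d * borel_of d]) (d z.1 z.2)%:E
     = (mdiam d / 2)%:E)%E
  <-> strictly_antipodal d.
Proof. exact: (main_equiv R T d hmet hcomp hhom m hinv). Qed.
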